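(* Let $p,k,q,n$ be positive integers. If there exist an S-template with width $q$ and $n+1$ colors and an S-template with width $p$ and $k$ colors, then there exists an S-template with width $pq$ and $n+k$ colors.
   Context: A set $A \subseteq \mathbb{N}$ is sum-free if for all $(a,b)\in A^2$ (allowing $a=b$), $a+b \notin A$. For positive integers $p,n$, an S-template with $n$ colors and width $p$ is a partition of $\{1,\dots,p\}$ into $n$ sum-free subsets $A_1,\dots,A_n$ such that for every $i \in \{1,\dots,n-1\}$ (i.e. every subset except $A_n$) and all $(x,y)\in A_i^2$: if $x+y>p$ then $x+y-p \notin A_i$. *)

(* Defs.v *)
From mathcomp Require Import all_boot.

(* An S-template with n colors and width p, encoded as a coloring
   c : nat -> nat of {1,...,p}; color i (0 <= i < n) corresponds to the
   subset A_(i+1) = {x in [1,p] | c x = i}.  Color n-1 is A_n, the subset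
   exempt from the modular condition.  Values of c outside [1,p] are
   irrelevant. *)
Definition S_template (n p : nat) (c : nat -> nat) : Prop :=
  (forall x, 1 <= x <= p -> c x < n) /\
  (* each A_i is sum-free (a = b allowed) *)
  (forall x y, 1 <= x -> 1 <= y -> x + y <= p -> c x = c y -> c (x + y) <> c x) /\
  (* for every A_i with i < n (0-indexed: c x < n.-1): x + y > p -> x + y - p notin A_i *)
  (forall x y, 1 <= x <= p -> 1 <= y <= p -> p < x + y -> c x = c y ->
     c x < n.-1 -> c (x + y - p) <> c x).

Definition has_S_template (n p : nat) : Prop := exists c, S_template n p c.

(* Main.v *)
Require Import Defs.
From mathcomp Require Import all_boot.
From mathcomp Require Import zify.

Definition Rq q x := (x.-1 %% q).+1.
Definition Aq q x := (x.-1 %/ q).+1.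
Definition comb n q (c1 c2 : nat -> nat) x :=
  if c1 (Rq q x) < n then c1 (Rq q x) else n + c2 (Aq q x).
Definition cval n (c1 c2 : nat -> nat) m t :=
  if c1 t < n then c1 t else n + c2 m.+1.

Lemma RA q m t : 0 < q -> 1 <= t <= q -> Rq q (m*q+t) = t /\ Aq q (m*q+t) = m.+1.
Proof.
move=> q0 ht.
rewrite /Rq /Aq; have -> : (m*q+t).-1 = m*q + t.-1 by lia.
rewrite divnMDl // modnMDl modn_small ?divn_small; try lia; split; lia.
Qed.

Lemma colorE n q c1 c2 m t : 0 < q -> 1 <= t <= q ->
  comb n q c1 c2 (m*q+t) = cval n c1 c2 m t.
Proof. by move=> q0 ht; rewrite /comb /cval; case: (@RA q m t q0 ht) => -> ->. Qed.

Lemma decomp q x : 0 < q -> 0 < x ->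
  exists m t, x = m*q + t /\ 1 <= t <= q.
Proof.
move=> q0 x0; exists (x.-1 %/ q), (x.-1 %% q).+1.
have h := divn_eq x.-1 q; have := ltn_pmod x.-1 q0; split; lia.
Qed.

Theorem theorem2p6 (p k q n : nat) :
  0 < p -> 0 < k -> 0 < q -> 0 < n ->
  has_S_template n.+1 q -> has_S_template k p ->
  has_S_template (n + k) (p * q).
Proof.
move=> p0 k0 q0 n0 [c1 [B1 [S1 M1]]] [c2 [B2 [S2 M2]]].
exists (comb n q c1 c2).
have key : forall x, 1 <= x <= p * q -> exists m t,
    x = m*q + t /\ 1 <= t <= q /\ m < p.
  move=> x hx; have [|m [t [ex ht]]] := @decomp q x q0 _; first lia.
  rewrite ex in hx *.
  exists m, t; split=> //; split=> //.
  have : m * q < p * q by lia.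
  by rewrite ltn_pmul2r.
have cE : forall m t, 1 <= t <= q -> comb n q c1 c2 (m*q+t) = cval n c1 c2 m t.
  by move=> m t; apply: colorE.
have main : forall x y, 1 <= x <= p*q -> 1 <= y <= p*q ->
    comb n q c1 c2 x = comb n q c1 c2 y ->
    (x + y <= p*q -> comb n q c1 c2 (x+y) <> comb n q c1 c2 x) /\
    (p*q < x + y -> comb n q c1 c2 x < (n+k).-1 ->
       comb n q c1 c2 (x+y-p*q) <> comb n q c1 c2 x).
  move=> x y hx' hy'.
  have [mx [tx [ex [htx hmx]]]] := key x hx'.
  have [my [ty [ey [hty hmy]]]] := key y hy'.
  subst x y; rewrite (colorE _ _ _ _ _ _ q0 htx) (colorE _ _ _ _ _ _ q0 hty) /cval => E.
  have Bx := B1 tx htx; have By := B1 ty hty.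
  have B2x : c2 mx.+1 < k by apply: B2; lia.
  have B2y : c2 my.+1 < k by apply: B2; lia.
  case: (leqP (tx + ty) q) => hs.
  + have Es : mx*q+tx + (my*q+ty) = (mx+my)*q + (tx+ty) by lia.
    have Ss : c1 tx = c1 ty -> c1 (tx+ty) <> c1 tx by move=> e; apply: S1; lia.
    have Bs : c1 (tx+ty) < n.+1 by apply: B1; lia.
    split.
    * move=> hle; rewrite Es cE; last lia. rewrite /cval.
      move: E; do 3 (case: ifP => ?); lia.
    * move=> hgt.
      have hm : p <= mx + my.
        have : p * q < (mx+my).+1 * q by lia.
        by rewrite ltn_pmul2r //.
      have -> : mx*q+tx + (my*q+ty) - p*q = (mx+my-p)*q + (tx+ty).
        rewrite mulnBl; have : p*q <= (mx+my)*q by rewrite leq_pmul2r.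
        lia.
      rewrite cE; last lia. rewrite /cval.
      move: E; do 3 (case: ifP => ?); lia.
  + have Es : mx*q+tx + (my*q+ty) = (mx+my).+1*q + (tx+ty-q) by lia.
    have Ms : c1 tx = c1 ty -> c1 tx < n -> c1 (tx+ty-q) <> c1 tx.
      by move=> e1 e2; apply: M1 => //; lia.
    have Bs : c1 (tx+ty-q) < n.+1 by apply: B1; lia.
    split.
    * move=> hle; have hm : (mx+my).+1 < p.
        have : (mx+my).+1 * q < p * q by lia.
        by rewrite ltn_pmul2r //.
      have S2' : c2 mx.+1 = c2 my.+1 -> c2 (mx+my).+2 <> c2 mx.+1.
        move=> e; have -> : (mx+my).+2 = mx.+1 + my.+1 by lia.
        apply: S2; lia.
      rewrite Es cE; last lia. rewrite /cval.
      move: E; do 3 (case: ifP => ?); lia.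
    * move=> hgt.
      have hm : p <= (mx + my).+1.
        have : p * q < (mx+my).+2 * q by lia.
        by rewrite ltn_pmul2r //.
      have M2' : c2 mx.+1 = c2 my.+1 -> c2 mx.+1 < k.-1 ->
          c2 ((mx+my).+1-p).+1 <> c2 mx.+1.
        move=> e1 e2; have -> : ((mx+my).+1-p).+1 = mx.+1 + my.+1 - p by lia.
        apply: M2; lia.
      have -> : mx*q+tx + (my*q+ty) - p*q = ((mx+my).+1-p)*q + (tx+ty-q).
        rewrite mulnBl; have : p*q <= (mx+my).+1*q by rewrite leq_pmul2r.
        lia.
      rewrite cE; last lia. rewrite /cval.
      move: E; do 3 (case: ifP => ?); lia.
split.
  move=> x hx; have [m [t [ex [ht hm]]]] := key x hx.
  rewrite ex colorE // /cval.
  have := B1 t ht; have : c2 m.+1 < k by apply: B2; lia.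
  case: ifP; lia.
split.
  move=> x y hx hy hxy E.
  have hx' : 1 <= x <= p*q by lia.
  have hy' : 1 <= y <= p*q by lia.
  have [h _] := main x y hx' hy' E.
  exact: h.
move=> x y hx hy hxy E hlt.
have [_ h] := main x y hx hy E.
exact: h.
Qed.
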